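(* Given an instance of school choice with feature-based uncertain preferences with exactly two features ($|F|=2$) and a matching $\pi$, the probability of stability $\mathsf{ProS}(\pi)$ can be computed in polynomial time (in fact in $O(mn)$ time, where $n=|N|$, $m=|M|$), given oracle access to the cumulative distribution functions of the weight distributions.
   Context: An instance consists of: a set $N$ of $n$ students; a set $M$ of $m$ colleges, each college $c$ with positive integer capacity $x_c$ and a strict preference $\succ_c$ over $N$; a finite set $F$ of features; for each student $s$ and feature $f$ a utility function $u_s^f:M\to[0,1]$; for each student $s$ a probability distribution $\mu_s$ over weight vectors $w_s=(w_s^f)_{f\in F}$ with $w_s^f\ge0$, $\sum_f w_s^f=1$. The distributions of different students are independent, and their p.d.f.s and c.d.f.s ($\Pr[\forall f,\ w_s^f\le w^f]$) can be evaluated in constant time. Every college is acceptable to every student and vice versa. For realized $w_s$, $c\succeq_s^{w_s}c'$ iff $\sum_f w_s^fu_s^f(c)\ge\sum_f w_s^fu_s^f(c')$, strict version $\succ_s^{w_s}$. A matching $\pi$ assigns each student to at most one college ($\pi(s)=\mathsf{null}$ if unmatched; any college is ranked above $\mathsf{null}$) so that each college $c$ receives a set $\pi(c)$ of at most $x_c$ students. Given realized weights, $\pi$ is (weakly) stable if there is no pair $(s,c)$ with $c\succ_s^{w_s}\pi(s)$ and either $|\pi(c)|<x_c$ or some $s'\in\pi(c)$ with $s\succ_c s'$. $\mathsf{ProS}(\pi)$ is the probability, over independent draws $w_s\sim\mu_s$ for all $s$, that $\pi$ is stable. *)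

(* Defs.v *)
From HB Require Import structures.
From mathcomp Require Import all_boot all_order all_algebra.
From mathcomp Require Import all_classical all_reals all_analysis.

Set Implicit Arguments.
Unset Strict Implicit.
Unset Printing Implicit Defensive.

Import Order.TTheory GRing.Theory Num.Theory.
Local Open Scope classical_set_scope.
Local Open Scope ring_scope.

(*   College c's strict preference over students is given by an injective    *)
(*   ranking  rank c : 'I_n -> nat ; s >_c s'  iff  rank c s < rank c s'.    *)
(*   A matching is pi : 'I_n -> option 'I_m (None = unmatched).              *)

Definition feat0 : 'I_2 := @Ordinal 2 0 isT.
Definition feat1 : 'I_2 := @Ordinal 2 1 isT.

Section Model.
Variables (R : realType) (n m : nat).

Definition in_simplex (w : R * R) : Prop := 0 <= w.1 /\ 0 <= w.2 /\ w.1 + w.2 = 1.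

Definition score (u : 'I_n -> 'I_2 -> 'I_m -> R) (s : 'I_n) (w : R * R)
  (c : 'I_m) : R := w.1 * u s feat0 c + w.2 * u s feat1 c.

Definition stud_prefers (u : 'I_n -> 'I_2 -> 'I_m -> R) (s : 'I_n) (w : R * R)
  (c : 'I_m) (o : option 'I_m) : Prop :=
  match o with
  | None => True
  | Some c' => score u s w c' < score u s w c
  end.

Definition assigned (pi : 'I_n -> option 'I_m) (c : 'I_m) : {set 'I_n} :=
  [set s | pi s == Some c].

Definition is_matching (cap : 'I_m -> nat) (pi : 'I_n -> option 'I_m) : Prop :=
  forall c, (#|assigned pi c| <= cap c)%N.

Definition blocking_pair (cap : 'I_m -> nat) (rank : 'I_m -> 'I_n -> nat)
  (u : 'I_n -> 'I_2 -> 'I_m -> R) (pi : 'I_n -> option 'I_m)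
  (w : 'I_n -> R * R) (s : 'I_n) (c : 'I_m) : Prop :=
  stud_prefers u s (w s) c (pi s) /\
  ((#|assigned pi c| < cap c)%N \/
   exists s', pi s' = Some c /\ (rank c s < rank c s')%N).

Definition stable (cap : 'I_m -> nat) (rank : 'I_m -> 'I_n -> nat)
  (u : 'I_n -> 'I_2 -> 'I_m -> R) (pi : 'I_n -> option 'I_m)
  (w : 'I_n -> R * R) : Prop :=
  forall s c, ~ blocking_pair cap rank u pi w s c.

Section Prob.
Context {d : measure_display} {T : measurableType d} (P : probability T R).

Definition mutually_independent (W : 'I_n -> T -> R * R) : Prop :=
  forall B : 'I_n -> set (R * R), (forall s, measurable (B s)) ->
    fine (P [set t | forall s, B s (W s t)]) =
    \prod_(s < n) fine (P ((W s) @^-1` (B s))).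

Definition cdf_of (W : 'I_n -> T -> R * R) (s : 'I_n) (x y : R) : R :=
  fine (P ((W s) @^-1` [set w | w.1 <= x /\ w.2 <= y])).

Definition ProS (cap : 'I_m -> nat) (rank : 'I_m -> 'I_n -> nat)
  (u : 'I_n -> 'I_2 -> 'I_m -> R) (pi : 'I_n -> option 'I_m)
  (W : 'I_n -> T -> R * R) : R :=
  fine (P [set t | stable cap rank u pi (fun s => W s t)]).
End Prob.
End Model.

(*   Programs are terms of a small first-order functional language with     *)
(*   exact real arithmetic, naturals, booleans, pairs, arrays, bounded loops *)
(*   and constant-time access to the input (instance data and c.d.f. oracle).*)
(*   Every evaluation step costs 1; creating an array of length k costs k+1. *)

Inductive value (R : Type) : Type :=
| VR of R
| VN of nat
| VB of bool
| VP of value R & value R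
| VA of nat & (nat -> value R).   (* array: length and contents *)
Arguments VR {R}. Arguments VN {R}. Arguments VB {R}. Arguments VP {R}. Arguments VA {R}.

Inductive expr : Type :=
| EVar of nat                        (* de Bruijn variable *)
| ENat of nat
| EBool of bool
| ERnat of nat                       (* real constant k%:R *)
| EAdd of expr & expr | ESub of expr & expr
| EMul of expr & expr | EDiv of expr & expr
| ELe of expr & expr | ELt of expr & expr          (* on reals *)
| ENAdd of expr & expr | ENSub of expr & expr
| ENMul of expr & expr
| ENLt of expr & expr | ENEq of expr & expr        (* on naturals *)
| ENot of expr | EAnd of expr & expr | EOr of expr & expr
| EIf of expr & expr & expr
| ELet of expr & expr                (* let x := e1 in e2 (x = EVar 0) *)
| EPair of expr & expr | EFst of expr | ESnd of expr
| ENewArr of expr & expr             (* new array of given length, filled *)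
| EGet of expr & expr                (* a[i] *)
| ESet of expr & expr & expr         (* a[i := v] *)
| ELoop of expr & expr & expr
    (* ELoop k init body : acc := init; for i = 0 .. k-1,
       acc := body evaluated with EVar 0 = acc, EVar 1 = i *)
| ENStud                             (* n *)
| ENColl                             (* m *)
| EUtil of expr & expr & expr        (* u_s^f(c) : feature f, student s, college c *)
| ERank of expr & expr               (* rank of student s for college c (c, s) *)
| ECap of expr                       (* capacity x_c *)
| EIsMatched of expr                 (* pi(s) <> null *)
| EMatchOf of expr                   (* pi(s) (0 if null) *)
| ECdf of expr & expr & expr.        (* oracle: c.d.f. of student s at (x, y) *)

Record input (R : Type) := Input {
  in_n : nat;
  in_m : nat;
  in_util : nat -> nat -> nat -> R;
  in_rank : nat -> nat -> nat;
  in_cap : nat -> nat;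
  in_match : nat -> option nat;
  in_cdf : nat -> R -> R -> R }.

Section Eval.
Variable R : realType.
Local Notation value := (value R).

Definition res := option (value * nat).

Definition ap1 (o : res) (f : value -> option value) : res :=
  match o with
  | Some (v, c) => omap (fun r => (r, c.+1)) (f v)
  | None => None
  end.

Definition ap2 (o1 o2 : res) (f : value -> value -> option value) : res :=
  match o1, o2 with
  | Some (v1, c1), Some (v2, c2) => omap (fun r => (r, (c1 + c2).+1)) (f v1 v2)
  | _, _ => None
  end.

Definition ap3 (o1 o2 o3 : res) (f : value -> value -> value -> option value) : res :=
  match o1, o2, o3 with
  | Some (v1, c1), Some (v2, c2), Some (v3, c3) =>
      omap (fun r => (r, (c1 + c2 + c3).+1)) (f v1 v2 v3)
  | _, _, _ => None
  end.

Definition rop (f : R -> R -> R) (a b : value) : option value :=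
  match a, b with VR x, VR y => Some (VR (f x y)) | _, _ => None end.
Definition rcmp (f : R -> R -> bool) (a b : value) : option value :=
  match a, b with VR x, VR y => Some (VB (f x y)) | _, _ => None end.
Definition nop (f : nat -> nat -> nat) (a b : value) : option value :=
  match a, b with VN x, VN y => Some (VN (f x y)) | _, _ => None end.
Definition ncmp (f : nat -> nat -> bool) (a b : value) : option value :=
  match a, b with VN x, VN y => Some (VB (f x y)) | _, _ => None end.
Definition bop (f : bool -> bool -> bool) (a b : value) : option value :=
  match a, b with VB x, VB y => Some (VB (f x y)) | _, _ => None end.

Fixpoint run (I : input R) (env : seq value) (e : expr) {struct e} : res :=
  match e with
  | EVar i => if (i < size env)%N then Some (nth (VN 0) env i, 1%N) else None
  | ENat k => Some (VN k, 1%N)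
  | EBool b => Some (VB b, 1%N)
  | ERnat k => Some (VR k%:R, 1%N)
  | EAdd a b => ap2 (run I env a) (run I env b) (rop +%R)
  | ESub a b => ap2 (run I env a) (run I env b) (rop (fun x y => x - y))
  | EMul a b => ap2 (run I env a) (run I env b) (rop *%R)
  | EDiv a b => ap2 (run I env a) (run I env b) (rop (fun x y => x / y))
  | ELe a b => ap2 (run I env a) (run I env b) (rcmp (fun x y => x <= y))
  | ELt a b => ap2 (run I env a) (run I env b) (rcmp (fun x y => x < y))
  | ENAdd a b => ap2 (run I env a) (run I env b) (nop addn)
  | ENSub a b => ap2 (run I env a) (run I env b) (nop subn)
  | ENMul a b => ap2 (run I env a) (run I env b) (nop muln)
  | ENLt a b => ap2 (run I env a) (run I env b) (ncmp (fun x y => x < y)%N)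
  | ENEq a b => ap2 (run I env a) (run I env b) (ncmp (fun x y => x == y))
  | ENot a => ap1 (run I env a)
                (fun v => if v is VB b then Some (VB (~~ b)) else None)
  | EAnd a b => ap2 (run I env a) (run I env b) (bop andb)
  | EOr a b => ap2 (run I env a) (run I env b) (bop orb)
  | EIf a b c =>
      match run I env a with
      | Some (VB true, c1) =>
          omap (fun p => (p.1, (c1 + p.2).+1)) (run I env b)
      | Some (VB false, c1) =>
          omap (fun p => (p.1, (c1 + p.2).+1)) (run I env c)
      | _ => None
      end
  | ELet a b =>
      match run I env a with
      | Some (v, c1) => omap (fun p => (p.1, (c1 + p.2).+1)) (run I (v :: env) b)
      | None => None
      end
  | EPair a b => ap2 (run I env a) (run I env b) (fun x y => Some (VP x y))
  | EFst a => ap1 (run I env a) (fun v => if v is VP x _ then Some x else None)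
  | ESnd a => ap1 (run I env a) (fun v => if v is VP _ y then Some y else None)
  | ENewArr a b =>
      match run I env a, run I env b with
      | Some (VN k, c1), Some (v, c2) =>
          Some (VA k (fun _ => v), (c1 + c2 + k).+1)
      | _, _ => None
      end
  | EGet a b => ap2 (run I env a) (run I env b)
      (fun x y => match x, y with
                  | VA k f, VN i => if (i < k)%N then Some (f i) else None
                  | _, _ => None end)
  | ESet a b c => ap3 (run I env a) (run I env b) (run I env c)
      (fun x y z => match x, y with
                  | VA k f, VN i =>
                      if (i < k)%N then
                        Some (VA k (fun j => if j == i then z else f j))
                      else None
                  | _, _ => None end)
  | ELoop a b body =>
      match run I env a, run I env b with
      | Some (VN k, c1), Some (v0, c2) =>
          let fix loop (j i : nat) (acc : value) (cost : nat) : res :=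
            match j with
            | 0 => Some (acc, cost)
            | j'.+1 =>
                match run I (acc :: VN i :: env) body with
                | Some (acc', c') => loop j' i.+1 acc' (cost + c')
                | None => None
                end
            end in
          loop k 0%N v0 (c1 + c2).+1
      | _, _ => None
      end
  | ENStud => Some (VN (in_n I), 1%N)
  | ENColl => Some (VN (in_m I), 1%N)
  | EUtil a b c => ap3 (run I env a) (run I env b) (run I env c)
      (fun x y z => match x, y, z with
                  | VN f, VN s, VN cc => Some (VR (in_util I f s cc))
                  | _, _, _ => None end)
  | ERank a b => ap2 (run I env a) (run I env b)
      (fun x y => match x, y with
                  | VN cc, VN s => Some (VN (in_rank I cc s))
                  | _, _ => None end)
  | ECap a => ap1 (run I env a)
      (fun x => if x is VN cc then Some (VN (in_cap I cc)) else None)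
  | EIsMatched a => ap1 (run I env a)
      (fun x => if x is VN s then Some (VB (in_match I s != None)) else None)
  | EMatchOf a => ap1 (run I env a)
      (fun x => if x is VN s then Some (VN (odflt 0%N (in_match I s))) else None)
  | ECdf a b c => ap3 (run I env a) (run I env b) (run I env c)
      (fun x y z => match x, y, z with
                  | VN s, VR p, VR q => Some (VR (in_cdf I s p q))
                  | _, _, _ => None end)
  end.

(* Encoding of an instance (with its c.d.f. oracle) as a program input;
   out-of-range indices return dummy values. *)
Definition mk_input (n m : nat) (cap : 'I_m -> nat) (rank : 'I_m -> 'I_n -> nat)
  (u : 'I_n -> 'I_2 -> 'I_m -> R) (pi : 'I_n -> option 'I_m)
  (cdf : 'I_n -> R -> R -> R) : input R :=
  {| in_n := n;
     in_m := m;
     in_util := fun f s c =>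
       match (insub f : option 'I_2), (insub s : option 'I_n),
             (insub c : option 'I_m) with
       | Some f', Some s', Some c' => u s' f' c'
       | _, _, _ => 0
       end;
     in_rank := fun c s =>
       match (insub c : option 'I_m), (insub s : option 'I_n) with
       | Some c', Some s' => rank c' s'
       | _, _ => 0%N
       end;
     in_cap := fun c =>
       match (insub c : option 'I_m) with Some c' => cap c' | None => 0%N end;
     in_match := fun s =>
       match (insub s : option 'I_n) with
       | Some s' => omap (@nat_of_ord m) (pi s')
       | None => None
       end;
     in_cdf := fun s x y =>
       match (insub s : option 'I_n) with Some s' => cdf s' x y | None => 0 end |}.
End Eval.

(* Main.v *)
Require Import Defs.
From HB Require Import structures.
From mathcomp Require Import all_boot all_order all_algebra.
From mathcomp Require Import all_classical all_reals all_analysis.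
From mathcomp Require Import zify ring lra.
Import Order.TTheory GRing.Theory Num.Theory.
Local Open Scope classical_set_scope.
Local Open Scope ring_scope.
Close Scope classical_set_scope.
Definition body_pre : expr :=
  EIf (EIsMatched (EVar 1))
    (ELet (EMatchOf (EVar 1))
      (ELet (EGet (EVar 1) (EVar 0))
        (ESet (EVar 2) (EVar 1)
          (EPair (ENAdd (EFst (EVar 0)) (ENat 1))
                 (ELet (ERank (EVar 1) (EVar 3))
                   (EIf (ENLt (ESnd (EVar 1)) (EVar 0)) (EVar 0) (ESnd (EVar 1))))))))
    (EVar 0).

Definition pre : expr :=
  ELoop ENStud (ENewArr ENColl (EPair (ENat 0) (ENat 0))) body_pre.

Definition upd_e : expr :=
  ELet (EMatchOf (EVar 4))
  (ELet (ESub (EUtil (ENat 1) (EVar 5) (EVar 3)) (EUtil (ENat 1) (EVar 5) (EVar 0)))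
  (ELet (ESub (EUtil (ENat 0) (EVar 6) (EVar 4)) (EUtil (ENat 0) (EVar 6) (EVar 1)))
  (ELet (ESub (EVar 0) (EVar 1))
   (EIf (ELt (ERnat 0) (EVar 0))
     (ELet (EDiv (ESub (ERnat 0) (EVar 2)) (EVar 0))
        (EPair (EFst (EVar 6)) (EIf (ELt (EVar 0) (ESnd (EVar 6))) (EVar 0) (ESnd (EVar 6)))))
     (EIf (ELt (EVar 0) (ERnat 0))
        (ELet (EDiv (ESub (ERnat 0) (EVar 2)) (EVar 0))
           (EPair (EIf (ELt (EFst (EVar 6)) (EVar 0)) (EVar 0) (EFst (EVar 6))) (ESnd (EVar 6))))
        (EIf (ELt (ERnat 0) (EVar 2))
           (EPair (EFst (EVar 5)) (ESub (ERnat 0) (ERnat 1)))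
           (EVar 5))))))).

Definition body_c : expr :=
  ELet (EGet (EVar 4) (EVar 1))
   (EIf (EOr (ENLt (EFst (EVar 0)) (ECap (EVar 2)))
             (ENLt (ERank (EVar 2) (EVar 4)) (ESnd (EVar 0))))
        (EIf (EIsMatched (EVar 4))
             upd_e
             (EPair (EFst (EVar 1)) (ESub (ERnat 0) (ERnat 1))))
        (EVar 1)).

Definition body_s : expr :=
  ELet (ELoop ENColl (EPair (ERnat 0) (ERnat 1)) body_c)
       (EMul (EVar 1) (ECdf (EVar 2) (ESnd (EVar 0)) (ESub (ERnat 1) (EFst (EVar 0))))).

Definition main_e : expr := ELoop ENStud (ERnat 1) body_s.

Definition prog : expr := ELet pre main_e.

Section A.
Set Implicit Arguments.
Variable R : realType.
Variable I : input R.

Definition loopf (env : seq (value R)) (body : expr) :=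
  fix loop (j i : nat) (acc : value R) (cost : nat) : res R :=
            match j with
            | 0 => Some (acc, cost)
            | j'.+1 =>
                match run I (acc :: VN i :: env) body with
                | Some (acc', c') => loop j' i.+1 acc' (cost + c')
                | None => None
                end
            end.

Lemma run_loop env a b body : run I env (ELoop a b body) =
  match run I env a, run I env b with
  | Some (VN k, c1), Some (v0, c2) => loopf env body k 0%N v0 (c1 + c2).+1
  | _, _ => None end.
Proof. by []. Qed.

Lemma loop_spec env body (g : nat -> value R) (B : nat) j i cost :
  (forall i', (i <= i' < i + j)%N -> exists c', run I (g i' :: VN i' :: env) body = Some (g i'.+1, c') /\ (c' <= B)%N) ->
  exists cost', loopf env body j i (g i) cost = Some (g (i + j)%N, cost') /\ (cost' <= cost + j * B)%N.
Proof.
elim: j i cost => [|j IH] i cost H.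
  by exists cost; rewrite addn0 mul0n addn0.
have Hi : (i <= i < i + j.+1)%N by rewrite leqnn addnS ltnS leq_addr.
have [c' [E Hc]] := H i Hi.
rewrite /= E.
have H' : forall i', (i.+1 <= i' < i.+1 + j)%N -> exists c', run I (g i' :: VN i' :: env) body = Some (g i'.+1, c') /\ (c' <= B)%N.
  move=> i' /andP[h1 h2]; apply: H; rewrite (ltnW h1) /=; by rewrite addnS -addSn.
have [cost' [E' Hc']] := IH i.+1 (cost + c')%N H'.
exists cost'; split; first by rewrite E' addSnnS.
rewrite mulSn; apply: (leq_trans Hc'); rewrite addnA leq_add2r leq_add2l //.
Qed.

Hypothesis HM : forall (i c : nat), in_match I i = Some c -> (c < in_m I)%N.

Fixpoint cnt (j c : nat) : nat :=
  if j is j'.+1 then (cnt j' c + (in_match I j' == Some c))%N else 0%N.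
Fixpoint mr (j c : nat) : nat :=
  if j is j'.+1 then
    (if in_match I j' == Some c then
       (if (mr j' c < in_rank I c j')%N then in_rank I c j' else mr j' c)
     else mr j' c)
  else 0%N.

Definition garr (j : nat) : value R :=
  VA (in_m I) (fun c => VP (VN (cnt j c)) (VN (mr j c))).

Lemma body_pre_spec env j : exists c',
  run I (garr j :: VN j :: env) body_pre = Some (garr j.+1, c') /\ (c' <= 30)%N.
Proof.
rewrite /body_pre /=.
case E: (in_match I j) => [c0|] /=.
  have Hc := @HM j c0 E. rewrite Hc /=.
  have Hv : garr j.+1 = VA (in_m I) (fun j0 => if j0 == c0 then VP (VN (cnt j c0 + 1)) (VN (if (mr j c0 < in_rank I c0 j)%N then in_rank I c0 j else mr j c0)) else VP (VN (cnt j j0)) (VN (mr j j0))).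
    rewrite /garr; apply: f_equal; apply boolp.functional_extensionality_dep; move=> x /=; rewrite E.
    case: (x =P c0) => [->|ne]; first by rewrite eqxx.
    have -> : (Some c0 == Some x) = false by apply/eqP => -[h]; apply: ne.
    by rewrite addn0.
  rewrite Hv; case: ifP => _ /=; by eexists; split.
have Hv : garr j = garr j.+1.
  rewrite /garr; apply: f_equal; apply boolp.functional_extensionality_dep; move=> x /=.
  by rewrite E addn0.
by rewrite -Hv; eexists; split.
Qed.

Definition elig (s c : nat) : bool :=
  (cnt (in_n I) c < in_cap I c)%N || (in_rank I c s < mr (in_n I) c)%N.

Definition upd (s c c' : nat) (LU : R * R) : R * R :=
  let b := in_util I 1 s c - in_util I 1 s c' in
  let a := in_util I 0 s c - in_util I 0 s c' in
  let k := a - b in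
  let v := (0%:R - b) / k in
  if 0%:R < k then (LU.1, if v < LU.2 then v else LU.2)
  else if k < 0%:R then (if LU.1 < v then v else LU.1, LU.2)
  else if 0%:R < b then (LU.1, 0%:R - 1%:R) else LU.

Definition stepLU (s c : nat) (LU : R * R) : R * R :=
  if elig s c then
    (if in_match I s is Some c' then upd s c c' LU else (LU.1, 0%:R - 1%:R))
  else LU.

Fixpoint LUf (s j : nat) : R * R :=
  if j is j'.+1 then stepLU s j' (LUf s j') else (0%:R, 1%:R).

Definition gLU s j : value R := VP (VR (LUf s j).1) (VR (LUf s j).2).

Lemma body_c_spec s i (acc : R) : (i < in_m I)%N -> exists c',
  run I (gLU s i :: VN i :: VR acc :: VN s :: garr (in_n I) :: [::]) body_c
    = Some (gLU s i.+1, c') /\ (c' <= 200)%N.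
Proof.
move=> Hi.
rewrite /body_c /= Hi /= /gLU /= /stepLU /elig.
case: (_ || _) => /=; last by eexists; split.
case E: (in_match I s) => [c'|] /=; last by eexists; split.
rewrite /upd.
by repeat (case: ifP => _ /=); eexists; split.
Qed.

Lemma run_let env a b : run I env (ELet a b) =
  match run I env a with
  | Some (v, c1) => omap (fun p => (p.1, (c1 + p.2).+1)) (run I (v :: env) b)
  | None => None end.
Proof. by []. Qed.

Fixpoint Pf (j : nat) : R :=
  if j is j'.+1 then Pf j' * in_cdf I j' (LUf j' (in_m I)).2 (1%:R - (LUf j' (in_m I)).1)
  else 1%:R.

Lemma body_s_spec s : exists c',
  run I (VR (Pf s) :: VN s :: [:: garr (in_n I)]) body_s = Some (VR (Pf s.+1), c')
  /\ (c' <= 30 + in_m I * 200)%N.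
Proof.
have [cl [El Hcl]] : exists cl,
  run I (VR (Pf s) :: VN s :: [:: garr (in_n I)]) (ELoop ENColl (EPair (ERnat 0) (ERnat 1)) body_c)
   = Some (gLU s (in_m I), cl) /\ (cl <= 5 + in_m I * 200)%N.
  rewrite run_loop /=.
  change (VP (VR 0%:R) (VR 1%:R)) with (gLU s 0).
  have [c' [E' Hc']] : exists cost', loopf (VR (Pf s) :: VN s :: [:: garr (in_n I)]) body_c (in_m I) 0 (gLU s 0) 5
      = Some (gLU s (0 + in_m I)%N, cost') /\ (cost' <= 5 + in_m I * 200)%N.
    apply: loop_spec => i' /andP[_ hi]; exact: body_c_spec.
  by exists c'; rewrite E'.
rewrite /body_s run_let El /=.
eexists; split; first reflexivity.
lia.
Qed.

Lemma prog_spec : exists cost,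
  run I [::] prog = Some (VR (Pf (in_n I)), cost) /\
  (cost <= 500 * ((in_m I).+1 * (in_n I).+1))%N.
Proof.
have [cp [Ep Hcp]] : exists cp, run I [::] pre = Some (garr (in_n I), cp) /\
    (cp <= 10 + in_m I + in_n I * 30)%N.
  rewrite /pre run_loop /=.
  change (VA (in_m I) (fun _ => VP (VN 0) (VN 0))) with (@garr 0).
  have [c' [E' Hc']] : exists cost', loopf [::] body_pre (in_n I) 0 (garr 0) (1 + (1 + (1 + 1).+1 + in_m I).+1).+1
      = Some (garr (0 + in_n I)%N, cost') /\ (cost' <= (1 + (1 + (1 + 1).+1 + in_m I).+1).+1 + in_n I * 30)%N.
    apply: (loop_spec [::] body_pre garr 30) => i' _; exact: body_pre_spec.
  exists c'; rewrite E'; split => //; lia.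
have [cm [Em Hcm]] : exists cm, run I [:: garr (in_n I)] main_e = Some (VR (Pf (in_n I)), cm) /\
    (cm <= 10 + in_n I * (30 + in_m I * 200))%N.
  rewrite /main_e run_loop /=.
  change (VR 1%:R) with ((fun s => VR (Pf s)) 0%N).
  have [c' [E' Hc']] : exists cost', loopf [:: garr (in_n I)] body_s (in_n I) 0 ((fun s => VR (Pf s)) 0%N) (1 + 1).+1
      = Some ((fun s => VR (Pf s)) (0 + in_n I)%N, cost') /\ (cost' <= (1 + 1).+1 + in_n I * (30 + in_m I * 200))%N.
    apply: (loop_spec [:: garr (in_n I)] body_s (fun s => VR (Pf s)) (30 + in_m I * 200)) => i' _; exact: body_s_spec.
  exists c'; rewrite E'; split => //; lia.
rewrite /prog run_let Ep Em /=.
eexists; split; first reflexivity.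
nia.
Qed.

Lemma mr_spec j c x : (x < mr j c)%N <-> exists i, (i < j)%N /\ in_match I i = Some c /\ (x < in_rank I c i)%N.
Proof.
elim: j => [|j IH] /=.
  by split => // -[i [//]].
case E: (in_match I j == Some c).
  have Ej : in_match I j = Some c by apply/eqP.
  have -> : (x < (if (mr j c < in_rank I c j)%N then in_rank I c j else mr j c))%N
     = (x < mr j c)%N || (x < in_rank I c j)%N.
    case: ifP => h; apply/idP/orP => [h'|]; [right=>//|case=> h'; [lia|done]|left=>//|case=> h'; [done|lia]].
  split.
    case/orP => [/IH [i [h1 h2]]|h]; first by exists i; split => //; lia.
    by exists j; split.
  move=> [i [hi [h1 h2]]]; apply/orP.
  case: (ltnP i j) => hij; first by left; apply/IH; exists i.
  have ij : i = j by lia.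
  by right; rewrite -ij.
split; first by move/IH => [i [h1 h2]]; exists i; split => //; lia.
move=> [i [hi [h1 h2]]]; apply/IH; exists i; split => //.
case: (ltnP i j) => hij //.
have ij : i = j by lia.
by move: E; rewrite -ij h1 eqxx.
Qed.

Lemma cnt_sum j c : cnt j c = (\sum_(i < j) (in_match I i == Some c))%N.
Proof. by elim: j => [|j IH] /=; rewrite ?big_ord0 ?big_ord_recr //= IH. Qed.

Definition condI (s c : nat) (w : R * R) : Prop :=
  if in_match I s is Some c' then
    w.1 * in_util I 0 s c + w.2 * in_util I 1 s c <= w.1 * in_util I 0 s c' + w.2 * in_util I 1 s c'
  else False.

Lemma step_spec s c (w : R * R) (LU : R * R) :
  0 <= w.1 -> 0 <= w.2 -> w.1 + w.2 = 1 ->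
  ((stepLU s c LU).1 <= w.1 /\ w.1 <= (stepLU s c LU).2) <->
  ((LU.1 <= w.1 /\ w.1 <= LU.2) /\ (elig s c -> condI s c w)).
Proof.
move=> h1 h2 h12.
rewrite /stepLU /condI; case: (elig s c) => /=; last by intuition.
case: (in_match I s) => [c'|] /=; last first.
  split; [move=> [_ h]; exfalso; lra | by move=> [_ /(_ isT)]].
rewrite /upd.
set b := in_util I 1 s c - in_util I 1 s c'.
set a := in_util I 0 s c - in_util I 0 s c'.
have Hc : (w.1 * in_util I 0 s c + w.2 * in_util I 1 s c <= w.1 * in_util I 0 s c' + w.2 * in_util I 1 s c')
   <-> (w.1 * (a - b) + b <= 0).
  have -> : w.2 = 1 - w.1 by lra.
  rewrite -subr_le0.
  have -> : w.1 * in_util I 0 s c + (1 - w.1) * in_util I 1 s c -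
    (w.1 * in_util I 0 s c' + (1 - w.1) * in_util I 1 s c') = w.1 * (a - b) + b.
    rewrite /a /b; ring.
  by [].
rewrite Hc.
case: (ltrgtP 0 (a - b)) => hk /=.
- have e : (w.1 <= (0 - b) / (a - b)) = (w.1 * (a - b) + b <= 0).
    rewrite ler_pdivlMr //; apply/idP/idP => h; lra.
  rewrite -e.
  case: ifP => hv /=.
    split => [[x y]|[[x y] /(_ isT) z]]; last by split.
    split; [split => //; lra | move=> _; lra].
  move/negbT: hv; rewrite -leNgt => hv.
  split => [[x y]|[[x y] /(_ isT) z]]; last by split.
  split; [split => //; lra | move=> _; lra].
- have e : ((0 - b) / (a - b) <= w.1) = (w.1 * (a - b) + b <= 0).
    rewrite ler_ndivrMr //; apply/idP/idP => h; lra.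
  rewrite -e.
  case: ifP => hv /=.
    split => [[x y]|[[x y] /(_ isT) z]]; last by split.
    split; [split => //; lra | move=> _; lra].
  move/negbT: hv; rewrite -leNgt => hv.
  split => [[x y]|[[x y] /(_ isT) z]]; last by split.
  split; [split => //; lra | move=> _; lra].
- rewrite -hk mulr0 add0r.
  case: ifP => hb /=.
    split => [[x y]|[[x y] /(_ isT) z]]; [exfalso; lra | exfalso; lra].
  move/negbT: hb; rewrite -leNgt => hb.
  split => [[x y]|[[x y] _]]; [split; [by split | move=> _; lra] | by split].
Qed.


Lemma LUf_spec s j (w : R * R) : 0 <= w.1 -> 0 <= w.2 -> w.1 + w.2 = 1 ->
  ((LUf s j).1 <= w.1 /\ w.1 <= (LUf s j).2) <->
  (forall c, (c < j)%N -> elig s c -> condI s c w).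
Proof.
move=> h1 h2 h12; elim: j => [|j IH] /=.
  by split => // _; split; lra.
rewrite step_spec // IH; split.
  move=> [H1 H2] c hc; case: (ltnP c j) => hcj; first exact: H1.
  have -> : c = j by lia.
  exact: H2.
move=> H; split; first by move=> c hc; apply: H; lia.
exact: H.
Qed.

Lemma event_spec s j (w : R * R) : 0 <= w.1 -> 0 <= w.2 -> w.1 + w.2 = 1 ->
  (w.1 <= (LUf s j).2 /\ w.2 <= 1%:R - (LUf s j).1) <->
  (forall c, (c < j)%N -> elig s c -> condI s c w).
Proof.
move=> h1 h2 h12; rewrite -LUf_spec //.
split => -[x y]; split => //; lra.
Qed.
End A.
Unset Implicit Arguments.

Local Open Scope classical_set_scope.
Local Open Scope ring_scope.

Lemma mB (R : realType) (x y : R) : measurable [set w : R * R | w.1 <= x /\ w.2 <= y].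
Proof.
have -> : [set w : R * R | w.1 <= x /\ w.2 <= y] = `]-oo, x] `*` `]-oo, y].
  by apply/seteqP; split => -[a b] /=; rewrite !in_itv /= => -[-> ->].
by apply: measurableX; exact: measurable_itv.
Qed.

Lemma Pf_prod (R : realType) (I : input R) j :
  Pf _ I j = \prod_(i < j) in_cdf I i (LUf _ I i (in_m I)).2 (1%:R - (LUf _ I i (in_m I)).1).
Proof. by elim: j => [|j IH] /=; rewrite ?big_ord0 ?big_ord_recr //= IH. Qed.

Section B.
Variables (R : realType) (n m : nat) (cap : 'I_m -> nat) (rank : 'I_m -> 'I_n -> nat)
    (u : 'I_n -> 'I_2 -> 'I_m -> R) (pi : 'I_n -> option 'I_m) (cdf : 'I_n -> R -> R -> R).

Let I := mk_input cap rank u pi cdf.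

Lemma I_match (s : 'I_n) : in_match I s = omap val (pi s).
Proof. by rewrite /= valK. Qed.
Lemma I_rank (c : 'I_m) (s : 'I_n) : in_rank I c s = rank c s.
Proof. by rewrite /= !valK. Qed.
Lemma I_cap (c : 'I_m) : in_cap I c = cap c.
Proof. by rewrite /= !valK. Qed.
Lemma I_cdf (s : 'I_n) x y : in_cdf I s x y = cdf s x y.
Proof. by rewrite /= !valK. Qed.
Lemma I_util0 (s : 'I_n) (c : 'I_m) : in_util I 0 s c = u s feat0 c.
Proof. by rewrite /= (valK feat0) !valK. Qed.
Lemma I_util1 (s : 'I_n) (c : 'I_m) : in_util I 1 s c = u s feat1 c.
Proof. by rewrite /= (valK feat1) !valK. Qed.
Lemma I_HM i c : in_match I i = Some c -> (c < in_m I)%N.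
Proof.
rewrite /=; case: insubP => [s' _ _|_] //.
by case: (pi s') => //= c' [<-]; exact: ltn_ord.
Qed.


Lemma I_cnt (c : 'I_m) : cnt _ I (in_n I) c = #|assigned pi c|.
Proof.
rewrite cnt_sum.
have -> : in_n I = n by [].
have -> : #|assigned pi c| = (\sum_(i < n) (pi i == Some c))%N.
  rewrite /assigned -sum1_card big_mkcond /=; apply: eq_bigr => i _; rewrite inE.
  by case: (_ == _).
apply: eq_bigr => i _; rewrite I_match; by case: (pi i).
Qed.

Lemma I_elig (s : 'I_n) (c : 'I_m) : elig _ I s c <->
  (#|assigned pi c| < cap c)%N \/ exists s', pi s' = Some c /\ (rank c s < rank c s')%N.
Proof.
rewrite /elig I_cnt I_cap I_rank; split.
  case/orP => [h|]; first by left.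
  move/mr_spec => [i [hi [h1 h2]]]; right.
  exists (Ordinal hi); split.
    move: h1; rewrite (I_match (Ordinal hi)).
    case: (pi _) => //= c' [e]; congr Some; exact: val_inj.
  by move: h2; rewrite (I_rank c (Ordinal hi)).
case=> [->//|[s' [h1 h2]]]; apply/orP; right; apply/mr_spec.
exists s'; split; first exact: ltn_ord.
by rewrite I_match h1 I_rank.
Qed.

Lemma I_cond (s : 'I_n) (c : 'I_m) (w : R * R) :
  condI _ I s c w <-> ~ stud_prefers u s w c (pi s).
Proof.
rewrite /condI I_match /stud_prefers /score; case: (pi s) => [c'|]; rewrite [omap _ _]/=; last by split.
rewrite !I_util0 !I_util1 leNgt; split; [by move/negP | by move/negP].
Qed.
End B.

Theorem proposition1 :
  exists (prog : expr) (C : nat),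
  forall (R : realType) (n m : nat)
    (cap : 'I_m -> nat) (rank : 'I_m -> 'I_n -> nat)
    (u : 'I_n -> 'I_2 -> 'I_m -> R) (pi : 'I_n -> option 'I_m)
    (d : measure_display) (T : measurableType d) (P : probability T R)
    (W : 'I_n -> T -> R * R),
    (forall c, 0 < cap c)%N ->
    (forall c, injective (rank c)) ->
    (forall s f c, 0 <= u s f c <= 1) ->
    is_matching cap pi ->
    (forall s, measurable_fun setT (W s)) ->
    (forall s t, in_simplex (W s t)) ->
    mutually_independent P W ->
    exists cost : nat,
      run (mk_input cap rank u pi (cdf_of P W)) [::] prog
        = Some (VR (ProS P cap rank u pi W), cost)
      /\ (cost <= C * (m.+1 * n.+1))%N.
Proof.
exists prog, 500 => R n m cap rank u pi d T P W hcap hinj hu hmatch hmeas hsimp hind.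
set I := mk_input cap rank u pi (cdf_of P W).
have [cost [E Hc]] := prog_spec _ I (@I_HM R n m cap rank u pi (cdf_of P W)).
exists cost; split => //.
rewrite E; congr (Some (VR _, _)).
rewrite Pf_prod.
set Bs := fun s : 'I_n => [set w : R * R | w.1 <= (LUf _ I s m).2 /\ w.2 <= 1%:R - (LUf _ I s m).1].
have Hset : [set t | stable cap rank u pi (fun s => W s t)] = [set t | forall s, Bs s (W s t)].
  apply/seteqP; split => t /= H.
    move=> s; have [h1 [h2 h12]] := hsimp s t.
    rewrite /Bs /=; apply/(event_spec _ I s m _ h1 h2 h12) => c hc hel.
    apply/(I_cond R n m cap rank u pi (cdf_of P W) s (Ordinal hc)) => hpref.
    apply: (H s (Ordinal hc)); split => //; exact/(I_elig R n m cap rank u pi (cdf_of P W)).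
  move=> s c [hpref hel]; have [h1 [h2 h12]] := hsimp s t.
  have := H s; rewrite /Bs /= => /(event_spec _ I s m _ h1 h2 h12) /(_ c (ltn_ord c)).
  move=> /(_ ((I_elig R n m cap rank u pi (cdf_of P W) s c).2 hel)).
  by move/(I_cond R n m cap rank u pi (cdf_of P W) s c).
rewrite /ProS Hset (hind Bs); last by move=> s; exact: mB.
apply: eq_bigr => s _; by rewrite (@I_cdf R n m cap rank u pi).
Qed.
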